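(* Let $\Pi$ be a policy class, $\pi_G$ a fixed goal-conditioned policy, $\rho^{e_1},\dots,\rho^{e_N}$ joint distributions over observations and goals (''source'' distributions, $E=\{e_1,\dots,e_N\}$) and $\rho^t$ a ''target'' joint distribution. Write $\epsilon^{e_i}=\epsilon^{\rho^{e_i}}$ and $\epsilon^t=\epsilon^{\rho^t}$. For weights $\alpha=(\alpha_1,\dots,\alpha_N)$ with $\alpha_i\in[0,1]$, $\sum_i\alpha_i=1$, let $$\lambda_\alpha=\inf_{\pi'\in\Pi}\Big[\sum_{i=1}^N\alpha_i\epsilon^{e_i}(\pi'\|\pi_G)+\epsilon^t(\pi'\|\pi_G)\Big],$$ let $\delta_E=\max_{e,e'\in E}d_{\Pi\Delta\Pi}(\rho^e,\rho^{e'})$, and let $B=B(\delta_E,E\mid\Pi)$. Then for every $\pi\in\Pi$, $$\epsilon^t(\pi\|\pi_G)\le \inf_\alpha\Big[\sum_{i=1}^N\alpha_i\epsilon^{e_i}(\pi\|\pi_G)+\lambda_\alpha\Big]+\delta_E+\inf_{\rho\in B}d_{\Pi\Delta\Pi}(\rho,\rho^t).$$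
   Context: A goal-conditioned policy is a conditional distribution $\pi(a\mid x,g)$ over actions given an observation $x$ and goal $g$. $D_{\mathrm{TV}}(\pi_1(\cdot\mid x,g)\|\pi_2(\cdot\mid x,g))=\sup_{A'}|\pi_1(A'\mid x,g)-\pi_2(A'\mid x,g)|$ over measurable sets of actions $A'$. For a joint distribution $\rho(x,g)$, $\epsilon^{\rho}(\pi_1\|\pi_2)=\mathbb{E}_{(x,g)\sim\rho}[D_{\mathrm{TV}}(\pi_1(\cdot\mid x,g)\|\pi_2(\cdot\mid x,g))]$. For a policy class $\Pi$, $d_{\Pi\Delta\Pi}(\rho,\rho')=\sup_{\pi,\pi'\in\Pi}|\epsilon^{\rho}(\pi\|\pi')-\epsilon^{\rho'}(\pi\|\pi')|$. The characteristic set $B(\delta,E\mid\Pi)$ of a collection of joint distributions $\{\rho^{e_i}\}_{e_i\in E}$ is the set of all joint distributions $\rho(x,g)$ with $d_{\Pi\Delta\Pi}(\rho,\rho^{e_i})\le\delta$ for every $e_i\in E$. *)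

(* Defs.v *)
From HB Require Import structures.
From mathcomp Require Import all_boot all_order all_algebra.
From mathcomp Require Import all_classical all_reals all_analysis.
From mathcomp Require Import measurable_realfun.
Set Implicit Arguments. Unset Strict Implicit. Unset Printing Implicit Defensive.
Import Order.TTheory GRing.Theory Num.Theory.
Local Open Scope classical_set_scope.
Local Open Scope ring_scope.
Local Open Scope ereal_scope.

Section PolicyDefs.
Context {d1 d2 d3 : measure_display} {X : measurableType d1}
  {G : measurableType d2} {A : measurableType d3} {R : realType}.

Notation policy := (X * G -> probability A R).
Notation joint := (probability (X * G)%type R).

Definition dTV (P Q : probability A R) : \bar R :=
  ereal_sup [set `|P B - Q B| | B in measurable].

Definition eps (rho : joint) (pi1 pi2 : policy) : \bar R :=
  \int[rho]_z dTV (pi1 z) (pi2 z).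

Definition dPiPi (Pi : set policy) (rho rho' : joint) : \bar R :=
  ereal_sup [set `|eps rho p p' - eps rho' p p'| | p in Pi & p' in Pi].

Definition charset (Pi : set policy) (delta : \bar R) (N : nat)
  (rhoE : 'I_N -> joint) : set joint :=
  [set rho | forall i, dPiPi Pi rho (rhoE i) <= delta].

Definition deltaE (Pi : set policy) (N : nat) (rhoE : 'I_N -> joint) : \bar R :=
  ereal_sup [set dPiPi Pi (rhoE i) (rhoE j) | i in [set: 'I_N] & j in [set: 'I_N]].

Definition weights (N : nat) : set ('I_N -> R) :=
  [set alpha | (forall i, (0 <= alpha i <= 1)%R) /\ (\sum_(i < N) alpha i)%R = 1%R].

Definition lambda (Pi : set policy) (piG : policy) (N : nat)
  (rhoE : 'I_N -> joint) (rhot : joint) (alpha : 'I_N -> R) : \bar R :=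
  ereal_inf [set (\sum_(i < N) (alpha i)%:E * eps (rhoE i) p piG) + eps rhot p piG
            | p in Pi].

End PolicyDefs.

(* Main.v *)
Require Import Defs.
From HB Require Import structures.
From mathcomp Require Import all_boot all_order all_algebra.
From mathcomp Require Import all_classical all_reals all_analysis.
From mathcomp Require Import measurable_realfun.
From mathcomp Require Import lra.
Import Order.TTheory GRing.Theory Num.Theory.
Local Open Scope classical_set_scope.
Local Open Scope ring_scope.
Local Open Scope ereal_scope.

Section H.
Context {d1 d2 d3 : measure_display} {X : measurableType d1}
  {G : measurableType d2} {A : measurableType d3} {R : realType}.

Lemma probE (P : probability A R) B : measurable B ->
  P B = (fine (P B))%:E /\ (0 <= fine (P B) <= 1)%R.
Proof.
move=> mB.
have h0 : 0 <= P B by [].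
have h1 : P B <= 1 by exact: probability_le1.
have fin : P B \is a fin_num by rewrite ge0_fin_numE // (le_lt_trans h1) ?ltey.
split; first by rewrite fineK.
by rewrite -lee_fin -[X in _ && X]lee_fin fineK // h0 h1.
Qed.

Lemma dTV_ge0 (P Q : probability A R) : 0 <= dTV P Q.
Proof.
rewrite /dTV; apply: le_trans (ereal_sup_ubound _); last first.
  by exists set0 => //; rewrite !measure0 subee // abse0.
by [].
Qed.

Lemma dTV_le1 (P Q : probability A R) : dTV P Q <= 1.
Proof.
apply: ge_ereal_sup => _ [B mB <-].
have [eP /andP[p0 p1]] := @probE P B mB; have [eQ /andP[q0 q1]] := @probE Q B mB.
rewrite eP eQ -EFinB abse_EFin lee_fin ler_norml; apply/andP; split; lra.
Qed.

Lemma dTV_tri1 (P Q S : probability A R) : dTV P Q <= dTV P S + dTV S Q.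
Proof.
apply: ge_ereal_sup => _ [B mB <-].
have e1 : `|P B - S B| <= dTV P S by apply: ereal_sup_ubound; exists B.
have e2 : `|S B - Q B| <= dTV S Q by apply: ereal_sup_ubound; exists B.
apply: le_trans (leeD e1 e2).
have [eP _] := @probE P B mB; have [eQ _] := @probE Q B mB; have [eS _] := @probE S B mB.
rewrite eP eQ eS.
by rewrite -!EFinB !abse_EFin -EFinD lee_fin ler_distD.
Qed.

Lemma dTV_tri2 (P Q S : probability A R) : dTV P Q <= dTV P S + dTV Q S.
Proof.
apply: ge_ereal_sup => _ [B mB <-].
have e1 : `|P B - S B| <= dTV P S by apply: ereal_sup_ubound; exists B.
have e2 : `|Q B - S B| <= dTV Q S by apply: ereal_sup_ubound; exists B.
apply: le_trans (leeD e1 e2).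
have [eP _] := @probE P B mB; have [eQ _] := @probE Q B mB; have [eS _] := @probE S B mB.
rewrite eP eQ eS.
rewrite -!EFinB !abse_EFin -EFinD lee_fin (distrC (fine (Q B))).
exact: ler_distD.
Qed.


Lemma fin01 (x : \bar R) : 0 <= x -> x <= 1 -> x = (fine x)%:E /\ (0 <= fine x <= 1)%R.
Proof.
move=> h0 h1.
have fin : x \is a fin_num by rewrite ge0_fin_numE // (le_lt_trans h1) ?ltey.
split; first by rewrite fineK.
by rewrite -lee_fin -[X in _ && X]lee_fin fineK // h0 h1.
Qed.

Notation policy := (X * G -> probability A R).
Notation joint := (probability (X * G)%type R).

Definition mfun (p q : policy) :=
  measurable_fun [set: X * G] (fun z => dTV (p z) (q z) : \bar R).

Lemma eps_ge0 (rho : joint) (p q : policy) : 0 <= eps rho p q.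
Proof. by apply: integral_ge0 => z _; exact: dTV_ge0. Qed.

Lemma eps_le1 (rho : joint) (p q : policy) : mfun p q -> eps rho p q <= 1.
Proof.
move=> m; rewrite /eps.
apply: le_trans (ge0_le_integral (f2 := cst 1) _ _ _ _ _ _) _ => //.
- by move=> z _; exact: dTV_ge0.
- by move=> z _; exact: dTV_le1.
- by rewrite integral_cst // mul1e; apply: probability_le1.
Qed.

Lemma eps01 (rho : joint) (p q : policy) : mfun p q ->
  eps rho p q = (fine (eps rho p q))%:E /\ (0 <= fine (eps rho p q) <= 1)%R.
Proof. by move=> m; apply: fin01; [exact: eps_ge0|exact: eps_le1]. Qed.

Lemma eps_tri1 (rho : joint) (p q s : policy) : mfun p q -> mfun p s -> mfun s q ->
  eps rho p q <= eps rho p s + eps rho s q.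
Proof.
move=> mpq mps msq; rewrite /eps -ge0_integralD //; last 2 first.
- by move=> z _; exact: dTV_ge0.
- by move=> z _; exact: dTV_ge0.
apply: ge0_le_integral => //.
- by move=> z _; exact: dTV_ge0.
- exact: emeasurable_funD.
- by move=> z _; exact: dTV_tri1.
Qed.

Lemma eps_tri2 (rho : joint) (p q s : policy) : mfun p q -> mfun p s -> mfun q s ->
  eps rho p q <= eps rho p s + eps rho q s.
Proof.
move=> mpq mps msq; rewrite /eps -ge0_integralD //; last 2 first.
- by move=> z _; exact: dTV_ge0.
- by move=> z _; exact: dTV_ge0.
apply: ge0_le_integral => //.
- by move=> z _; exact: dTV_ge0.
- exact: emeasurable_funD.
- by move=> z _; exact: dTV_tri2.
Qed.

Section PiS.
Variable Pi : set policy.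
Hypothesis hm : forall p q, Pi p -> Pi q -> mfun p q.
Variable pi0 : policy.
Hypothesis Hpi0 : Pi pi0.

Lemma dPiPi_ge0 (r r' : joint) : 0 <= dPiPi Pi r r'.
Proof.
apply: le_trans (ereal_sup_ubound _); last first.
  exists pi0 => //; exists pi0 => //; reflexivity.
have [e _] := eps01 r _ _ (hm _ _ Hpi0 Hpi0); have [e' _] := eps01 r' _ _ (hm _ _ Hpi0 Hpi0).
by rewrite e e' -EFinB abse_EFin lee_fin.
Qed.

Lemma dPiPi_le1 (r r' : joint) : dPiPi Pi r r' <= 1.
Proof.
apply: ge_ereal_sup => _ [p Hp [p' Hp' <-]].
have [e /andP[a0 a1]] := eps01 r _ _ (hm _ _ Hp Hp'); have [e' /andP[b0 b1]] := eps01 r' _ _ (hm _ _ Hp Hp').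
rewrite e e' -EFinB abse_EFin lee_fin ler_norml; apply/andP; split; lra.
Qed.

Lemma eps_dPiPi (r r' : joint) (p p' : policy) : Pi p -> Pi p' ->
  (fine (eps r p p') <= fine (eps r' p p') + fine (dPiPi Pi r r'))%R.
Proof.
move=> Hp Hp'.
have e1 : `|eps r p p' - eps r' p p'| <= dPiPi Pi r r'.
  by apply: ereal_sup_ubound; exists p => //; exists p'.
have [e _] := eps01 r _ _ (hm _ _ Hp Hp'); have [e' _] := eps01 r' _ _ (hm _ _ Hp Hp').
have [ed _] := @fin01 (dPiPi Pi r r') (dPiPi_ge0 r r') (dPiPi_le1 r r').
move: e1; rewrite {1}e {1}e' {1}ed -EFinB abse_EFin lee_fin.
exact: ler_distlDr.
Qed.

Lemma eps_dPiPi' (r r' : joint) (p p' : policy) : Pi p -> Pi p' ->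
  (fine (eps r' p p') <= fine (eps r p p') + fine (dPiPi Pi r r'))%R.
Proof.
move=> Hp Hp'.
have e1 : `|eps r p p' - eps r' p p'| <= dPiPi Pi r r'.
  by apply: ereal_sup_ubound; exists p => //; exists p'.
have [e _] := eps01 r _ _ (hm _ _ Hp Hp'); have [e' _] := eps01 r' _ _ (hm _ _ Hp Hp').
have [ed _] := @fin01 (dPiPi Pi r r') (dPiPi_ge0 r r') (dPiPi_le1 r r').
move: e1; rewrite {1}e {1}e' {1}ed -EFinB abse_EFin lee_fin.
exact: ler_distlCDr.
Qed.

End PiS.

Lemma eps_fin (rho : joint) (p q : policy) : mfun p q -> eps rho p q \is a fin_num.
Proof.
move=> m; rewrite ge0_fin_numE ?eps_ge0 //.
exact: le_lt_trans (@eps_le1 rho p q m) (ltry _).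
Qed.

Lemma fle3 (x y z : \bar R) : x \is a fin_num -> y \is a fin_num -> z \is a fin_num ->
  x <= y + z -> (fine x <= fine y + fine z)%R.
Proof.
move=> fx fy fz; rewrite -[x]fineK // -[y]fineK // -[z]fineK // -EFinD lee_fin /=.
Qed.


End H.

Theorem proposition3 (d1 d2 d3 : measure_display) (X : measurableType d1)
  (G : measurableType d2) (A : measurableType d3) (R : realType)
  (Pi : set (X * G -> probability A R)) (piG : X * G -> probability A R)
  (N : nat) (rhoE : 'I_N -> probability (X * G)%type R)
  (rhot : probability (X * G)%type R)
  (hN : (0 < N)%N)
  (hmeas : forall p1 p2, (Pi `|` [set piG]) p1 -> (Pi `|` [set piG]) p2 ->
     measurable_fun [set: X * G] (fun z => dTV (p1 z) (p2 z) : \bar R)) :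
  forall pi, Pi pi ->
  eps rhot pi piG <=
    ereal_inf [set (\sum_(i < N) (alpha i)%:E * eps (rhoE i) pi piG)
                   + lambda Pi piG rhoE rhot alpha | alpha in @weights R N]
    + deltaE Pi rhoE
    + ereal_inf [set dPiPi Pi rho rhot | rho in charset Pi (deltaE Pi rhoE) rhoE].
Proof.
move=> pi Hpi.
have hm : forall p q, Pi p -> Pi q -> mfun p q.
  by move=> p q Hp Hq; apply: hmeas; left.
have hpG : forall p, Pi p -> mfun p piG.
  by move=> p Hp; apply: hmeas; [left|right].
set i0 := Ordinal hN.
have D0 : 0 <= deltaE Pi rhoE.
  apply: le_trans (ereal_sup_ubound _); last first.
    by exists i0 => //; exists i0 => //.
  exact: (@dPiPi_ge0 _ _ _ _ _ _ _ Pi hm pi Hpi).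
have D1 : deltaE Pi rhoE <= 1.
  by apply: ge_ereal_sup => _ [i _ [j _ <-]]; exact: (dPiPi_le1 Pi hm).
have [eD /andP[D0r D1r]] := fin01 _ D0 D1.
have sumE : forall (a : 'I_N -> R) (x : 'I_N -> \bar R),
    (forall i, x i \is a fin_num) ->
    \sum_(i < N) (a i)%:E * x i = (\sum_(i < N) a i * fine (x i))%:E.
  move=> a x hx; rewrite -sumEFin; apply: eq_bigr => i _.
  by rewrite EFinM fineK.
have SE : forall p (al : 'I_N -> R), Pi p ->
    \sum_(i < N) (al i)%:E * eps (rhoE i) p piG =
    (\sum_(i < N) al i * fine (eps (rhoE i) p piG))%:E.
  by move=> p al Hp; apply: sumE => i; apply: eps_fin; exact: hpG.
have S0 : forall p (al : 'I_N -> R), weights al ->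
    0 <= \sum_(i < N) (al i)%:E * eps (rhoE i) p piG.
  move=> p al [Wa _]; apply: sume_ge0 => i _; apply: mule_ge0; last exact: eps_ge0.
  by rewrite lee_fin; case/andP: (Wa i).
have lam0 : forall al, weights al -> 0 <= lambda Pi piG rhoE rhot al.
  move=> al Wal; apply: le_ereal_inf_tmp => _ [p Hp <-].
  by apply: adde_ge0; [exact: S0|exact: eps_ge0].
have lamfin : forall al, weights al -> lambda Pi piG rhoE rhot al \is a fin_num.
  move=> al Wal; rewrite ge0_fin_numE ?lam0 //.
  have hle : lambda Pi piG rhoE rhot al <=
      \sum_(i < N) (al i)%:E * eps (rhoE i) pi piG + eps rhot pi piG.
    by apply: ereal_inf_lbound; exists pi.
  apply: le_lt_trans hle _.
  by rewrite SE // -(fineK (eps_fin rhot _ _ (hpG _ Hpi))) -EFinD ltry.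
pose alpha0 : 'I_N -> R := fun i => (i == i0)%:R.
have W0 : weights alpha0.
  split => [i|].
    by rewrite /alpha0; case: (i == i0); rewrite ?ler01 ?lexx.
  rewrite (bigD1 i0) //= /alpha0 eqxx big1 ?addr0 // => j /negPf -> //.
set F := ereal_inf _.
set Gi := ereal_inf _.
have F0 : 0 <= F.
  apply: le_ereal_inf_tmp => _ [al Wal <-].
  by apply: adde_ge0; [exact: S0|exact: lam0].
have Ffin : F \is a fin_num.
  rewrite ge0_fin_numE //.
  have hle : F <= \sum_(i < N) (alpha0 i)%:E * eps (rhoE i) pi piG
                 + lambda Pi piG rhoE rhot alpha0.
    by apply: ereal_inf_lbound; exists alpha0.
  apply: le_lt_trans hle _.
  by rewrite SE // -(fineK (lamfin _ W0)) -EFinD ltry.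
have G0 : 0 <= Gi.
  apply: le_ereal_inf_tmp => _ [rho _ <-].
  exact: (dPiPi_ge0 Pi hm pi Hpi).
have dfin : forall r r', dPiPi Pi r r' \is a fin_num.
  move=> r r'; rewrite ge0_fin_numE ?(dPiPi_ge0 Pi hm pi Hpi) //.
  exact: le_lt_trans (dPiPi_le1 Pi hm r r') (ltry _).
have Dfin : deltaE Pi rhoE \is a fin_num by rewrite eD.
have core : forall al, weights al ->
    forall rho, charset Pi (deltaE Pi rhoE) rhoE rho -> forall p', Pi p' ->
  (fine (eps rhot pi piG) <=
     \sum_(i < N) al i * fine (eps (rhoE i) pi piG)
     + (\sum_(i < N) al i * fine (eps (rhoE i) p' piG) + fine (eps rhot p' piG))
     + fine (deltaE Pi rhoE) + fine (dPiPi Pi rho rhot))%R.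
  move=> al [Wa Ws] rho Brho p' Hp'.
  have h1 := fle3 _ _ _ (eps_fin rhot _ _ (hpG _ Hpi)) (eps_fin rhot _ _ (hm _ _ Hpi Hp'))
     (eps_fin rhot _ _ (hpG _ Hp'))
     (eps_tri1 rhot _ _ _ (hpG _ Hpi) (hm _ _ Hpi Hp') (hpG _ Hp')).
  have h2 := eps_dPiPi' Pi hm pi Hpi rho rhot pi p' Hpi Hp'.
  have h3 : forall i, (fine (eps rho pi p') <=
      fine (eps (rhoE i) pi p') + fine (deltaE Pi rhoE))%R.
    move=> i; have := eps_dPiPi Pi hm pi Hpi rho (rhoE i) pi p' Hpi Hp'.
    have := fine_le (dfin rho (rhoE i)) Dfin (Brho i).
    lra.
  have h4 : forall i, (fine (eps (rhoE i) pi p') <=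
      fine (eps (rhoE i) pi piG) + fine (eps (rhoE i) p' piG))%R.
    move=> i; apply: (fle3 _ _ _ (eps_fin _ _ _ (hm _ _ Hpi Hp'))
      (eps_fin _ _ _ (hpG _ Hpi)) (eps_fin _ _ _ (hpG _ Hp'))).
    exact: (eps_tri2 _ _ _ _ (hm _ _ Hpi Hp') (hpG _ Hpi) (hpG _ Hp')).
  have h5 : (\sum_(i < N) al i * fine (eps rho pi p') <=
     \sum_(i < N) (al i * fine (eps (rhoE i) pi piG)
        + al i * fine (eps (rhoE i) p' piG) + al i * fine (deltaE Pi rhoE)))%R.
    apply: ler_sum => i _; rewrite -!mulrDr; apply: ler_wpM2l.
      by case/andP: (Wa i).
    have := h3 i; have := h4 i; lra.
  rewrite !big_split /= -!mulr_suml Ws !mul1r in h5.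
  lra.
have eL := fineK (eps_fin rhot _ _ (hpG _ Hpi)).
have [->|Gnf] := eqVneq Gi +oo.
  by rewrite -(fineK Ffin) eD addey // leey.
have Gfin : Gi \is a fin_num by rewrite ge0_fin_numE // ltey.
have hF : ((fine (eps rhot pi piG) - fine (deltaE Pi rhoE) - fine Gi)%:E <= F).
  apply: le_ereal_inf_tmp => _ [al Wal <-].
  rewrite SE // -(fineK (lamfin al Wal)) -EFinD lee_fin.
  have hG : ((fine (eps rhot pi piG) - fine (deltaE Pi rhoE)
       - \sum_(i < N) al i * fine (eps (rhoE i) pi piG)
       - fine (lambda Pi piG rhoE rhot al))%:E <= Gi).
    apply: le_ereal_inf_tmp => _ [rho Brho <-].
    rewrite -(fineK (dfin rho rhot)) lee_fin.
    have hL : ((fine (eps rhot pi piG) - fine (deltaE Pi rhoE)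
       - \sum_(i < N) al i * fine (eps (rhoE i) pi piG)
       - fine (dPiPi Pi rho rhot))%:E <= lambda Pi piG rhoE rhot al).
      apply: le_ereal_inf_tmp => _ [p' Hp' <-].
      rewrite (SE p' al Hp') -(fineK (eps_fin rhot _ _ (hpG _ Hp'))) -EFinD lee_fin.
      have := core al Wal rho Brho p' Hp'.
      lra.
    rewrite -(fineK (lamfin al Wal)) lee_fin in hL.
    lra.
  rewrite -(fineK Gfin) lee_fin in hG.
  lra.
rewrite -(fineK Ffin) lee_fin in hF.
rewrite -eL -(fineK Ffin) eD -(fineK Gfin) -!EFinD lee_fin.
lra.
Qed.
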